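(* For any $x,y\in\mathbb{R}^n$, $$\big\langle x-y,\ \mathbb{E}_{\mathbb{S}}[(a_{i^*}^Ty-b_{i^*})^+a_{i^*}]\big\rangle=\langle x-y,\nabla f(y)\rangle\le f(x)-f(y)\le\frac{\mu_2}{2}d(x,P)^2-\frac{\mu_1}{2}d(y,P)^2,$$ where in the expectation $i^*$ is selected at the point $y$.
   Context: Let $A\in\mathbb{R}^{m\times n}$ have rows $a_1^T,\dots,a_m^T$ with $\|a_i\|_2=1$, and $b\in\mathbb{R}^m$; assume $Ax\le b$ is consistent and let $P=\{x:Ax\le b\}$, $\mathcal{P}(x)$ the Euclidean projection onto $P$, $d(x,P)=\|x-\mathcal{P}(x)\|$, $t^+=\max\{t,0\}$. Fix an integer $1\le\beta\le m$. Sampling distribution $\mathbb{S}$ at a point $u$: $\tau\subseteq\{1,\dots,m\}$ with $|\tau|=\beta$ uniformly at random, and $i^*\in\tau$ maximizing $(a_i^Tu-b_i)^+$ over $\tau$; $\mathbb{E}_{\mathbb{S}}$ is expectation over $\tau$. $f(u)=\mathbb{E}_{\mathbb{S}}[\frac12|(a_{i^*}^Tu-b_{i^*})^+|^2]$ and $\nabla f(u):=\mathbb{E}_{\mathbb{S}}[(a_{i^*}^Tu-b_{i^*})^+a_{i^*}]$ (with $i^*$ selected at $u$). $L>0$ is a Hoffman constant ($d(u,P)^2\le L^2\|(Au-b)^+\|^2$ for all $u$); $\mu_1=\frac1{mL^2}$, $\mu_2=\min\{1,\frac{\beta}{m}\lambda_{\max}(A^TA)\}$. *)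

(* Defs.v *)
From HB Require Import structures.
From mathcomp Require Import all_boot all_order all_algebra.
From mathcomp Require Import classical_sets reals.
Set Implicit Arguments. Unset Strict Implicit. Unset Printing Implicit Defensive.
Import Order.TTheory GRing.Theory Num.Theory.
Local Open Scope ring_scope.
Local Open Scope classical_set_scope.

Section Defs.
Variable R : realType.

Definition inner (n : nat) (u v : 'cV[R]_n) : R := \sum_(j < n) u j 0 * v j 0.
Definition norm2 (n : nat) (u : 'cV[R]_n) : R := Num.sqrt (inner u u).

Definition posp (t : R) : R := Num.max t 0.

Definition polyhedron (m n : nat) (A : 'M[R]_(m, n)) (b : 'cV[R]_m) : set 'cV[R]_n :=
  [set z | forall i : 'I_m, (A *m z) i 0 <= b i 0].

Definition distP (m n : nat) (A : 'M[R]_(m, n)) (b : 'cV[R]_m) (x : 'cV[R]_n) : R :=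
  inf [set norm2 (x - z) | z in polyhedron A b].

Definition resid (m n : nat) (A : 'M[R]_(m, n)) (b : 'cV[R]_m) (u : 'cV[R]_n)
  (i : 'I_m) : R := posp ((A *m u) i 0 - b i 0).

Definition residv (m n : nat) (A : 'M[R]_(m, n)) (b : 'cV[R]_m) (u : 'cV[R]_n)
  : 'cV[R]_m := \col_i resid A b u i.

(* sample space of the sampling distribution S: subsets of size beta, uniform *)
Definition samples (m beta : nat) : {set {set 'I_m}} :=
  [set tau : {set 'I_m} | #|tau| == beta].

Definition ExpS (V : lmodType R) (m beta : nat) (g : {set 'I_m} -> V) : V :=
  (#|samples m beta|%:R)^-1 *: \sum_(tau in samples m beta) g tau.

(* max over tau of (a_i^T u - b_i)^+ , i.e. the value at i^* *)
Definition maxres (m n : nat) (A : 'M[R]_(m, n)) (b : 'cV[R]_m) (u : 'cV[R]_n)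
  (tau : {set 'I_m}) : R := \big[Num.max/0]_(i in tau) resid A b u i.

Definition fS (m n beta : nat) (A : 'M[R]_(m, n)) (b : 'cV[R]_m) (u : 'cV[R]_n) : R :=
  @ExpS R^o m beta (fun tau => (maxres A b u tau) ^+ 2 / 2).

(* sel is a valid selection rule for i^* at the point u *)
Definition is_selection (m n beta : nat) (A : 'M[R]_(m, n)) (b : 'cV[R]_m)
  (u : 'cV[R]_n) (sel : {set 'I_m} -> 'I_m) : Prop :=
  forall tau : {set 'I_m}, #|tau| = beta ->
    sel tau \in tau /\ forall j, j \in tau -> resid A b u j <= resid A b u (sel tau).

Definition gradS (m n beta : nat) (A : 'M[R]_(m, n)) (b : 'cV[R]_m) (u : 'cV[R]_n)
  (sel : {set 'I_m} -> 'I_m) : 'cV[R]_n :=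
  ExpS beta (fun tau => resid A b u (sel tau) *: (row (sel tau) A)^T).

Definition lambda_max (n : nat) (M : 'M[R]_n) : R := sup [set a | eigenvalue M a].

End Defs.

(* Main.v *)
Require Import Defs.
From HB Require Import structures.
From mathcomp Require Import all_boot all_order all_algebra all_fingroup.
From mathcomp Require Import classical_sets reals.
From mathcomp Require Import all_classical all_reals all_analysis.
From mathcomp Require Import ring lra.
Import Order.TTheory GRing.Theory Num.Theory.
Import numFieldTopology.Exports numFieldNormedType.Exports.
Set Implicit Arguments. Unset Strict Implicit. Unset Printing Implicit Defensive.
Local Open Scope ring_scope.
Local Open Scope classical_set_scope.

Section RayA.

Variable R : realType.

Lemma mul_self_ge0 (x : R) : 0 <= x * x.
Proof. by rewrite -expr2 sqr_ge0. Qed.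

Lemma cont_sum n (I : Type) (r : seq I) (F : I -> 'rV[R]_n -> R) :
  (forall i, continuous (F i)) -> continuous (fun u => \sum_(i <- r) F i u).
Proof.
move=> Fc; elim: r => [|a r IH].
  under eq_fun do rewrite big_nil. exact: cst_continuous.
under eq_fun do rewrite big_cons.
move=> x; exact: (continuousD (Fc a x) (IH x)).
Qed.

Lemma cont_mul n (f g : 'rV[R]_n -> R) :
  continuous f -> continuous g -> continuous (fun u => f u * g u).
Proof. by move=> fc gc x; exact: (continuousM (fc x) (gc x)). Qed.

Definition qf n (M : 'M[R]_n) (u w : 'rV[R]_n) : R := (u *m M *m w^T) 0 0.

Lemma qfE n (M : 'M[R]_n) u w :
  qf M u w = \sum_j (\sum_i u 0 i * M i j) * w 0 j.
Proof.
rewrite /qf mxE; apply: eq_bigr => j _; rewrite !mxE; congr (_ * _).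
Qed.

Lemma qf_cont n (M : 'M[R]_n) : continuous (fun u => qf M u u).
Proof.
under eq_fun do rewrite qfE.
apply: cont_sum => j; apply: cont_mul; last exact: coord_continuous.
apply: cont_sum => i; apply: cont_mul; first exact: coord_continuous.
exact: cst_continuous.
Qed.

Lemma qf1 n (u w : 'rV[R]_n) : qf 1%:M u w = \sum_i u 0 i * w 0 i.
Proof.
rewrite qfE; apply: eq_bigr => j _; congr (_ * _).
rewrite (bigD1 j) //= big1 ?addr0; first by rewrite mxE eqxx mulr1.
by move=> i /negbTE ij; rewrite mxE ij mulr0.
Qed.

Lemma qf1_ge0 n (u : 'rV[R]_n) : 0 <= qf 1%:M u u.
Proof. by rewrite qf1 sumr_ge0 // => i _; exact: mul_self_ge0. Qed.

Lemma qf1_eq0 n (u : 'rV[R]_n) : qf 1%:M u u = 0 -> u = 0.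
Proof.
rewrite qf1 => h; apply/rowP => i; rewrite mxE.
have := psumr_eq0P (P := predT) (fun i _ => mul_self_ge0 (u 0 i)) h.
by move=> /(_ i isT) /eqP; rewrite mulf_eq0 orbb => /eqP.
Qed.

Lemma e00D (A B : 'M[R]_1) : (A + B) 0 0 = A 0 0 + B 0 0. Proof. by rewrite !mxE. Qed.
Lemma e00B (A B : 'M[R]_1) : (A - B) 0 0 = A 0 0 - B 0 0. Proof. by rewrite !mxE. Qed.
Lemma e00Z (a : R) (A : 'M[R]_1) : (a *: A) 0 0 = a * A 0 0. Proof. by rewrite !mxE. Qed.
Lemma qfDl n (M : 'M[R]_n) u v w : qf M (u + v) w = qf M u w + qf M v w.
Proof. by rewrite /qf !mulmxDl e00D. Qed.
Lemma qfDr n (M : 'M[R]_n) u v w : qf M w (u + v) = qf M w u + qf M w v.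
Proof. by rewrite /qf linearD /= !mulmxDr e00D. Qed.
Lemma qfZl n (M : 'M[R]_n) (t : R) u w : qf M (t *: u) w = t * qf M u w.
Proof. by rewrite /qf -!scalemxAl e00Z. Qed.
Lemma qfZr n (M : 'M[R]_n) (t : R) u w : qf M w (t *: u) = t * qf M w u.
Proof. by rewrite /qf linearZ /= -scalemxAr e00Z. Qed.
Lemma qfC n (M : 'M[R]_n) u w : M^T = M -> qf M u w = qf M w u.
Proof.
move=> hM; rewrite /qf; transitivity ((u *m M *m w^T)^T 0 0); first by rewrite [RHS]mxE.
by rewrite !trmx_mul trmxK hM mulmxA.
Qed.
Lemma qfB n (M N : 'M[R]_n) u w : qf (M - N) u w = qf M u w - qf N u w.
Proof. by rewrite /qf mulmxBr mulmxBl e00B. Qed.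
Lemma qfS n (M : 'M[R]_n) (a : R) u w : qf (a%:M *m M) u w = a * qf M u w.
Proof. by rewrite /qf mulmxA mul_mx_scalar -!scalemxAl e00Z. Qed.

Lemma rayleigh n (M : 'M[R]_n) : (0 < n)%N -> M^T = M -> (forall u, 0 <= qf M u u) ->
  exists lam, [/\ 0 <= lam, eigenvalue M lam & forall u, qf M u u <= lam * qf 1%:M u u].
Proof.
case: n M => [//|n] M _ hM hpsd.
pose S := [set u : 'rV[R]_n.+1 | qf 1%:M u u = 1].
have S0 : S !=set0.
  exists (delta_mx 0 0); rewrite /S /= qf1 (bigD1 0) //= big1 ?addr0.
    by rewrite mxE eqxx mulr1.
  by move=> i /negbTE i0; rewrite mxE i0 andbF mul0r.
have Scl : closed S.
  have -> : S = (fun u => qf 1%:M u u) @^-1` [set x | x = 1] by [].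
  apply: preimage_closed; last exact: closed_eq.
  by move=> x _; exact: qf_cont.
have Sb : bounded_set S.
  rewrite /= /bounded_near; near=> K => u Su /=.
  apply: (@le_trans _ _ 1); last by near: K; exact: nbhs_pinfty_ge.
  rewrite /Num.norm /= mx_normrE; apply: bigmax_le => // -[i j] _ /=.
  rewrite (ord1 i).
  have : (u 0 j)^+2 <= 1.
    rewrite -Su qf1 (bigD1 j) //= expr2 lerDl sumr_ge0 // => k _.
    exact: mul_self_ge0.
  rewrite -real_normK ?num_real // => h; have := normr_ge0 (u 0 j); nra.
have Scp : compact S by exact: bounded_closed_compact.
have [v vS vmax] := EVT_max_rV S0 Scp (continuous_subspaceT (@qf_cont _ M)).
rewrite inE /S /= in vS.
pose lam := qf M v v.
have hray : forall u, qf M u u <= lam * qf 1%:M u u.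
  move=> u; have [u0|u0] := eqVneq u 0.
    by rewrite u0 /qf !mul0mx !mxE mulr0.
  have hp : 0 < qf 1%:M u u.
    rewrite lt_def qf1_ge0 andbT; apply/eqP => /qf1_eq0 hu.
    by rewrite hu eqxx in u0.
  pose s := (Num.sqrt (qf 1%:M u u))^-1.
  have s2 : s ^+ 2 * qf 1%:M u u = 1.
    by rewrite /s exprVn sqr_sqrtr ?ltW // mulVf // gt_eqF.
  have := vmax (s *: u); rewrite inE /S /= qfZl qfZr mulrA -expr2 s2 => /(_ erefl).
  rewrite qfZl qfZr mulrA -expr2 -/lam => h.
  have s2p : 0 < s ^+ 2.
    by rewrite exprn_gt0 // invr_gt0 sqrtr_gt0.
  rewrite -(ler_pM2l s2p) mulrCA s2 mulr1; exact: h.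
exists lam; split => //; first exact: hpsd.
pose B := lam%:M *m 1%:M - M.
have hBT : B^T = B by rewrite /B linearB /= mulmx1 tr_scalar_mx hM.
have hB u : 0 <= qf B u u by rewrite /B qfB qfS subr_ge0.
have hBv : qf B v v = 0 by rewrite /B qfB qfS vS mulr1 subrr.
pose w := v *m B.
have hw : qf B v w = qf 1%:M w w by rewrite /qf /w mulmx1.
pose c := qf 1%:M w w; pose d := qf B w w.
have hexp t : qf B (v + t *: w) (v + t *: w) = 2 * t * c + t ^+ 2 * d.
  rewrite qfDl !qfDr hBv !qfZl !qfZr (qfC w v hBT) hw -/c -/d; ring.
have c0 : c = 0.
  have d0 : 0 <= d := hB w.
  have := hB (v + (- c / (d + 1)) *: w); rewrite hexp => h.
  have c0 : 0 <= c by exact: qf1_ge0.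
  have dp : 0 < d + 1 by rewrite ltr_wpDl.
  apply/eqP; rewrite eq_le c0 andbT.
  have : 0 <= - (c ^+ 2 * (d + 2)) / (d + 1) ^+ 2.
    suff -> : - (c ^+ 2 * (d + 2)) / (d + 1) ^+ 2 = 2 * (- c / (d + 1)) * c + (- c / (d + 1)) ^+ 2 * d by [].
    by field; rewrite gt_eqF.
  move=> key.
  have e : (- (c ^+ 2 * (d + 2)) / (d + 1) ^+ 2) * (d + 1) ^+ 2 = - (c ^+ 2 * (d + 2)).
    by field; rewrite gt_eqF.
  have : 0 <= - (c ^+ 2 * (d + 2)) by rewrite -e mulr_ge0 // sqr_ge0.
  nra.
have w0 : w = 0 by apply: qf1_eq0.
apply/eigenvalueP; exists v.
  move: w0; rewrite /w /B mulmxBr mulmx1 mul_mx_scalar => /eqP.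
  by rewrite subr_eq0 => /eqP <-.
apply/eqP => v0; move: vS; rewrite v0 /qf mul0mx mul0mx mxE => /eqP.
by rewrite eq_sym oner_eq0.
Unshelve. all: end_near.
Qed.


Lemma lam_bound n (M : 'M[R]_n) : (0 < n)%N -> M^T = M -> (forall u, 0 <= qf M u u) ->
  0 <= lambda_max M /\ forall u, qf M u u <= lambda_max M * qf 1%:M u u.
Proof.
move=> n0 hM hpsd; have [lam [l0 el hray]] := rayleigh n0 hM hpsd.
have ub : forall a, eigenvalue M a -> a <= lam.
  move=> a /eigenvalueP [v hv v0].
  have e : qf M v v = a * qf 1%:M v v by rewrite /qf hv -scalemxAl e00Z mulmx1.
  have hp : 0 < qf 1%:M v v.
    rewrite lt_def qf1_ge0 andbT; apply/eqP => /qf1_eq0 hu.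
    by rewrite hu eqxx in v0.
  by rewrite -(ler_pM2r hp) -e; exact: hray.
have -> : lambda_max M = lam.
  rewrite /lambda_max; apply/le_anti/andP; split.
    by apply: ge_sup; [exists lam | move=> a /ub].
  apply: sup_upper_bound => //; split; first by exists lam.
  by exists lam => a /ub.
by split.
Qed.

Lemma e_B m n (A B : 'M[R]_(m, n)) i j : (A - B) i j = A i j - B i j.
Proof. by rewrite !mxE. Qed.

Lemma inner_sumr n (I : finType) (P : pred I) (u : 'cV[R]_n) (F : I -> 'cV[R]_n) :
  inner u (\sum_(t | P t) F t) = \sum_(t | P t) inner u (F t).
Proof.
rewrite /inner; under eq_bigr do rewrite summxE mulr_sumr.
exact: exchange_big.
Qed.

Lemma innerZ n (u v : 'cV[R]_n) c : inner u (c *: v) = c * inner u v.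
Proof. rewrite /inner mulr_sumr; apply: eq_bigr => j _; by rewrite mxE mulrCA. Qed.

Lemma inner_row m n (A : 'M[R]_(m, n)) (w : 'cV[R]_n) i :
  inner w (row i A)^T = (A *m w) i 0.
Proof. rewrite /inner mxE; apply: eq_bigr => j _; rewrite !mxE mulrC. done. Qed.

Lemma inner_ge0 n (u : 'cV[R]_n) : 0 <= inner u u.
Proof. by rewrite /inner sumr_ge0 // => i _; exact: mul_self_ge0. Qed.

Lemma CS n (w a : 'cV[R]_n) : inner a a = 1 -> (inner w a) ^+ 2 <= inner w w.
Proof.
move=> haa; have [c hc] : exists c, inner w a = c by eexists. rewrite hc.
have e : \sum_j (w j 0 - c * a j 0) ^+ 2 = \sum_j w j 0 * w j 0
    - 2 * c * (\sum_j w j 0 * a j 0) + c ^+ 2 * (\sum_j a j 0 * a j 0).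
  rewrite !mulr_sumr -sumrB -big_split /=; apply: eq_bigr => j _; ring.
have : 0 <= \sum_j (w j 0 - c * a j 0) ^+ 2 by apply: sumr_ge0 => j _; exact: sqr_ge0.
rewrite e -[\sum_j w j 0 * a j 0]/(inner w a) hc -[\sum_j a j 0 * a j 0]/(inner a a) haa.
rewrite -[\sum_j w j 0 * w j 0]/(inner w w); nra.
Qed.

Lemma qfAA m n (A : 'M[R]_(m, n)) (u : 'rV[R]_n) :
  qf (A^T *m A) u u = \sum_i ((A *m u^T) i 0) ^+ 2.
Proof.
rewrite /qf !mulmxA -(mulmxA (u *m A^T)).
have -> : u *m A^T = (A *m u^T)^T by rewrite trmx_mul trmxK.
rewrite [LHS]mxE; apply: eq_bigr => i _; rewrite [_^T 0 i]mxE expr2 //.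
Qed.

Lemma qf1T n (w : 'cV[R]_n) : qf 1%:M w^T w^T = inner w w.
Proof. by rewrite qf1 /inner; apply: eq_bigr => i _; rewrite !mxE. Qed.

Lemma bm_ge0 m (tau : {set 'I_m}) (F : 'I_m -> R) :
  0 <= \big[Num.max/0]_(i in tau) F i.
Proof. exact: bigmax_ge_id. Qed.

Lemma bm_ge m (tau : {set 'I_m}) (F : 'I_m -> R) i : i \in tau ->
  F i <= \big[Num.max/0]_(i in tau) F i.
Proof. by move=> hi; exact: (le_bigmax_cond _ F hi). Qed.

Lemma bm_le m (tau : {set 'I_m}) (F : 'I_m -> R) c : 0 <= c ->
  (forall i, i \in tau -> F i <= c) -> \big[Num.max/0]_(i in tau) F i <= c.
Proof. by move=> c0 h; apply: bigmax_le. Qed.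

Lemma bm_sq m (tau : {set 'I_m}) (F : 'I_m -> R) : (forall i, 0 <= F i) ->
  (\big[Num.max/0]_(i in tau) F i) ^+ 2 <= \sum_(i in tau) F i ^+ 2.
Proof.
move=> F0.
pose K (a s : R) := 0 <= a /\ a ^+ 2 <= s.
suff [] : K (\big[Num.max/0]_(i in tau) F i) (\sum_(i in tau) F i ^+ 2) by [].
apply: (big_rec2 K); first by split; rewrite ?expr2 ?mulr0.
move=> i a s _ [a0 h]; have Fi0 := F0 i; have s0 : 0 <= s by apply: le_trans h; exact: sqr_ge0.
by case: (leP (F i) a) => hh; split => //; nra.
Qed.

Lemma sum_le_bm m (tau : {set 'I_m}) (F : 'I_m -> R) : (forall i, 0 <= F i) ->
  \sum_(i in tau) F i ^+ 2 <= #|tau|%:R * (\big[Num.max/0]_(i in tau) F i) ^+ 2.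
Proof.
move=> F0.
apply: le_trans (_ : \sum_(i in tau) (\big[Num.max/0]_(i in tau) F i) ^+ 2 <= _).
  apply: ler_sum => i hi; rewrite !expr2; apply: ler_pM => //; exact: bm_ge.
by rewrite sumr_const mulr_natl.
Qed.

Lemma avg_sets m beta (g : 'I_m -> R) : (0 < m)%N ->
  \sum_(tau in samples m beta) \sum_(i in tau) g i
  = (beta%:R * #|samples m beta|%:R / m%:R) * \sum_i g i.
Proof.
move=> m0.
pose cnt i := #|[set tau in samples m beta | i \in tau]|.
have X (h : 'I_m -> R) : \sum_(tau in samples m beta) \sum_(i in tau) h i
    = \sum_i (cnt i)%:R * h i.
  under eq_bigr do rewrite big_mkcond /=.
  rewrite exchange_big /=; apply: eq_bigr => i _.
  rewrite -big_mkcondr /=.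
  rewrite (eq_bigl (fun tau => tau \in [set tau in samples m beta | i \in tau])); last first.
    by move=> tau; rewrite !inE.
  by rewrite sumr_const mulr_natl.
have le i j : (cnt i <= cnt j)%N.
  pose p := tperm i j.
  rewrite /cnt -(card_imset _ (imset_inj (@perm_inj _ p))).
  apply: subset_leq_card; apply/fintype.subsetP => _ /imsetP [tau htau ->].
  rewrite !inE in htau *; case/andP: htau => /eqP hc hi.
  rewrite card_imset; last exact: perm_inj.
  rewrite hc eqxx /=; apply/imsetP; exists i => //; by rewrite /p tpermL.
have cst i j : cnt i = cnt j by apply/anti_leq; rewrite !le.
pose i0 := Ordinal m0.
have hc : m%:R * (cnt i0)%:R = beta%:R * #|samples m beta|%:R :> R.
  have L : \sum_(tau in samples m beta) \sum_(i in tau) (1:R) = beta%:R * #|samples m beta|%:R.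
    rewrite (eq_bigr (fun=> beta%:R)); first by rewrite sumr_const mulr_natr.
    by move=> tau; rewrite /samples inE => /eqP <-; rewrite sumr_const.
  have Rr : \sum_i (cnt i)%:R * (1:R) = m%:R * (cnt i0)%:R.
    rewrite (eq_bigr (fun=> (cnt i0)%:R)); last by move=> i _; rewrite mulr1 (cst i i0).
    by rewrite sumr_const card_ord mulr_natl.
  by rewrite -L -Rr X.
rewrite X; under eq_bigr => i _ do rewrite (cst i i0).
rewrite -mulr_sumr; congr (_ * _).
have mn : m%:R != 0 :> R by rewrite pnatr_eq0 -lt0n.
by rewrite -hc; field.
Qed.

Lemma conv_key (X Y c M : R) : posp (X - c) <= M ->
  posp (Y - c) * (X - Y) <= M ^+ 2 / 2 - posp (Y - c) ^+ 2 / 2.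
Proof.
have e : X - Y = (X - c) - (Y - c) by ring.
rewrite e /posp; move: (X - c) (Y - c) => u t h.
have M0 : 0 <= M by apply: le_trans h; rewrite le_max lexx orbT.
have hM := sqr_ge0 M; have hut := sqr_ge0 (u - t).
move: h; case: (leP u 0) => h1 h; case: (leP t 0) => h2.
- rewrite mul0r expr0n /= mul0r subr0; nra.
- have : t * u <= 0 by rewrite pmulr_rle0.
  nra.
- rewrite mul0r expr0n /= mul0r subr0; nra.
- have : 0 <= (M - u) * (M + u) by rewrite mulr_ge0 // ?subr_ge0 // addr_ge0 // ltW.
  nra.
Qed.

Lemma posp_ge0 (t : R) : 0 <= posp t.
Proof. by rewrite /posp le_max lexx orbT. Qed.

End RayA.

Theorem lemma7 (R : realType) (m n beta : nat)
  (A : 'M[R]_(m, n)) (b : 'cV[R]_m) (L : R)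
  (hrows : forall i : 'I_m, norm2 (row i A)^T = 1)
  (hcons : exists x0 : 'cV[R]_n, polyhedron A b x0)
  (hbeta : (1 <= beta <= m)%N)
  (hL : 0 < L)
  (hHoff : forall u : 'cV[R]_n, distP A b u ^+ 2 <= L ^+ 2 * norm2 (residv A b u) ^+ 2)
  (x y : 'cV[R]_n) (sel : {set 'I_m} -> 'I_m)
  (hsel : is_selection beta A b y sel) :
  let mu1 := (m%:R * L ^+ 2)^-1 in
  let mu2 := Num.min 1 (beta%:R / m%:R * lambda_max (A^T *m A)) in
  inner (x - y) (ExpS beta (fun tau => resid A b y (sel tau) *: (row (sel tau) A)^T))
    = inner (x - y) (gradS beta A b y sel)
  /\ inner (x - y) (gradS beta A b y sel) <= fS beta A b x - fS beta A b y
  /\ fS beta A b x - fS beta A b y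
       <= mu2 / 2 * distP A b x ^+ 2 - mu1 / 2 * distP A b y ^+ 2.
Proof.
move=> mu1 mu2.
split; first by [].
set N := #|samples m beta|.
have m0 : (0 < m)%N by case/andP: hbeta => h1 h2; apply: leq_trans h2.
have b0 : (0 < beta)%N by case/andP: hbeta.
have Npos : (0 < N)%N.
  by rewrite /N /samples card_draws card_ord bin_gt0; case/andP: hbeta.
have Nn0 : N%:R != 0 :> R by rewrite pnatr_eq0 -lt0n.
have mn0 : m%:R != 0 :> R by rewrite pnatr_eq0 -lt0n.
have bn0 : beta%:R != 0 :> R by rewrite pnatr_eq0 -lt0n.
have Ngt : 0 < N%:R :> R by rewrite ltr0n.
have mgt : 0 < m%:R :> R by rewrite ltr0n.
have bgt : 0 < beta%:R :> R by rewrite ltr0n.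
have n0 : (0 < n)%N.
  case: (posnP n) => // n0'; have := hrows (Ordinal m0); rewrite /norm2 /inner.
  rewrite big1 ?sqrtr0; first by move=> /eqP; rewrite eq_sym oner_eq0.
  move=> j _; exfalso; have := ltn_ord j; move: (nat_of_ord j) => k; by rewrite n0'.
have haa i : inner (row i A)^T (row i A)^T = 1.
  have := sqr_sqrtr (inner_ge0 (row i A)^T); rewrite -/(norm2 _) hrows expr1n.
  by move=> <-.
have fSE u : fS beta A b u = N%:R^-1 * \sum_(tau in samples m beta) (maxres A b u tau ^+ 2 / 2).
  by [].
have cardS tau : tau \in samples m beta -> #|tau| = beta.
  by rewrite /samples inE => /eqP.
split.
  have gE : inner (x - y) (gradS beta A b y sel) = N%:R^-1 * \sum_(tau in samples m beta)
      (resid A b y (sel tau) * ((A *m x) (sel tau) 0 - (A *m y) (sel tau) 0)).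
    rewrite /gradS /ExpS innerZ inner_sumr; congr (_ * _); apply: eq_bigr => tau _.
    by rewrite innerZ inner_row mulmxBr e_B.
  rewrite gE !fSE -mulrBr; apply: ler_wpM2l; first by rewrite invr_ge0 ler0n.
  rewrite -sumrB; apply: ler_sum => tau htau.
  have [sin smax] := hsel tau (cardS tau htau).
  have my : maxres A b y tau = resid A b y (sel tau).
    apply/le_anti/andP; split; last exact: (bm_ge (fun i => resid A b y i) sin).
    by apply: bm_le => //; exact: posp_ge0.
  have mx : resid A b x (sel tau) <= maxres A b x tau.
    exact: (bm_ge (fun i => resid A b x i) sin).
  rewrite my; exact: conv_key.
have two0 : (2 : R) != 0 by rewrite pnatr_eq0.
have hy : mu1 / 2 * distP A b y ^+ 2 <= fS beta A b y.
  pose r := fun i => resid A b y i.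
  have sr : norm2 (residv A b y) ^+ 2 = \sum_i r i ^+ 2.
    rewrite /norm2 sqr_sqrtr ?inner_ge0 // /inner; apply: eq_bigr => i _.
    by rewrite !mxE expr2.
  have low : (\sum_i r i ^+ 2) / (2 * m%:R) <= fS beta A b y.
    rewrite fSE.
    apply: le_trans (_ : N%:R^-1 * \sum_(tau in samples m beta)
        ((\sum_(i in tau) r i ^+ 2) / (2 * beta%:R)) <= _).
      have := avg_sets beta (fun i => r i ^+ 2) m0; rewrite /= => e.
      rewrite -mulr_suml e le_eqVlt; apply/orP; left; apply/eqP.
      by field; rewrite ?Nn0 ?mn0 ?bn0 ?two0.
    apply: ler_wpM2l; first by rewrite invr_ge0 ler0n.
    apply: ler_sum => tau htau.
    have hS := sum_le_bm tau (F := r) (fun i => posp_ge0 _).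
    rewrite cardS // in hS.
    rewrite ler_pdivrMr ?mulr_gt0 //.
    have -> : maxres A b y tau ^+ 2 / 2 * (2 * beta%:R) = beta%:R * maxres A b y tau ^+ 2.
      by field.
    exact: hS.
  apply: le_trans (_ : mu1 / 2 * (L ^+ 2 * norm2 (residv A b y) ^+ 2) <= _).
    apply: ler_wpM2l (hHoff y).
    by rewrite /mu1 divr_ge0 // invr_ge0 mulr_ge0 // ?ler0n ?sqr_ge0.
  rewrite sr; apply: le_trans low; rewrite le_eqVlt; apply/orP; left; apply/eqP.
  by rewrite /mu1; field; rewrite ?mn0 ?two0 ?gt_eqF.
have psd : forall u, 0 <= qf (A^T *m A) u u.
  by move=> u; rewrite qfAA; apply: sumr_ge0 => i _; exact: sqr_ge0.
have symM : (A^T *m A)^T = A^T *m A by rewrite trmx_mul trmxK.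
have [lam0 hray] := @lam_bound _ _ (A^T *m A) n0 symM psd.
have hxp : forall p, polyhedron A b p -> fS beta A b x <= mu2 / 2 * inner (x - p) (x - p).
  move=> p hp; set w := x - p.
  have hz i : resid A b x i <= `|(A *m w) i 0|.
    rewrite /resid /posp ge_max normr_ge0 andbT; apply: le_trans (ler_norm _).
    by rewrite /w mulmxBr e_B lerD2l lerN2; exact: hp i.
  have hz2 i : (A *m w) i 0 ^+ 2 <= inner w w.
    by rewrite -inner_row; exact: CS (haa i).
  have hr2 i : resid A b x i ^+ 2 <= (A *m w) i 0 ^+ 2.
    rewrite -[X in _ <= X]real_normK ?num_real // !expr2.
    by apply: ler_pM; [exact: posp_ge0 | exact: posp_ge0 | exact: hz | exact: hz].
  have b1 : fS beta A b x <= inner w w / 2.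
    rewrite fSE.
    apply: le_trans (_ : N%:R^-1 * \sum_(tau in samples m beta) (inner w w / 2) <= _).
      apply: ler_wpM2l; first by rewrite invr_ge0 ler0n.
      apply: ler_sum => tau _; apply: ler_wpM2r; first by rewrite invr_ge0 ler0n.
      have hm : maxres A b x tau <= norm2 w.
        apply: bm_le; first exact: sqrtr_ge0.
        move=> i _; apply: le_trans (hz i) _.
        by rewrite -sqrtr_sqr ler_sqrt ?inner_ge0 //.
      rewrite -[inner w w](sqr_sqrtr (inner_ge0 w)) -/(norm2 w) !expr2.
      by apply: ler_pM => //; exact: bm_ge0.
    by rewrite sumr_const -/N -[(inner w w / 2) *+ N]mulr_natl mulKf.
  have b2 : fS beta A b x <= beta%:R / m%:R * (lambda_max (A^T *m A) * inner w w) / 2.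
    rewrite fSE.
    apply: le_trans (_ : N%:R^-1 * \sum_(tau in samples m beta)
        ((\sum_(i in tau) (A *m w) i 0 ^+ 2) / 2) <= _).
      apply: ler_wpM2l; first by rewrite invr_ge0 ler0n.
      apply: ler_sum => tau _; apply: ler_wpM2r; first by rewrite invr_ge0 ler0n.
      apply: le_trans (bm_sq tau (F := fun i => resid A b x i) (fun i => posp_ge0 _)) _.
      by apply: ler_sum => i _; exact: hr2.
    have := avg_sets beta (fun i => (A *m w) i 0 ^+ 2) m0; rewrite /= => e.
    rewrite -mulr_suml e.
    have hq := hray w^T; rewrite qfAA qf1T trmxK in hq.
    have -> : N%:R^-1 * (beta%:R * N%:R / m%:R * (\sum_i (A *m w) i 0 ^+ 2) / 2)
        = beta%:R / m%:R * (\sum_i (A *m w) i 0 ^+ 2) / 2.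
      by field; rewrite ?Nn0 ?mn0 ?two0.
    apply: ler_wpM2r; first by rewrite invr_ge0 ler0n.
    by apply: ler_wpM2l => //; rewrite divr_ge0 ?ler0n.
  rewrite /mu2; case: (leP 1 (beta%:R / m%:R * lambda_max (A^T *m A))) => hh.
    by rewrite mul1r mulrC; exact: b1.
  by move: b2; rewrite mulrA mulrAC.
have mu2ge0 : 0 <= mu2.
  rewrite /mu2; case: (leP 1 (beta%:R / m%:R * lambda_max (A^T *m A))) => _ //.
  by rewrite mulr_ge0 // divr_ge0 ?ler0n.
have fx0 : 0 <= fS beta A b x.
  rewrite fSE mulr_ge0 ?invr_ge0 ?ler0n // sumr_ge0 // => tau _.
  by rewrite divr_ge0 ?sqr_ge0 ?ler0n.
have [p0 hp0] := hcons.
have hx : fS beta A b x <= mu2 / 2 * distP A b x ^+ 2.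
  have K0 : 0 <= mu2 / 2 by rewrite divr_ge0 ?ler0n.
  case: (eqVneq (mu2 / 2) 0) => K00.
    by rewrite K00 mul0r; have := hxp p0 hp0; rewrite K00 mul0r.
  have Kp : 0 < mu2 / 2 by rewrite lt_def K00 K0.
  pose t := Num.sqrt (fS beta A b x / (mu2 / 2)).
  have ht : t <= distP A b x.
    apply: lb_le_inf; first by exists (norm2 (x - p0)); exists p0.
    move=> _ [p hp <-]; rewrite /t /norm2 ler_sqrt ?inner_ge0 //.
    by rewrite ler_pdivrMr // mulrC; exact: hxp p hp.
  have : t ^+ 2 <= distP A b x ^+ 2.
    by rewrite !expr2; apply: ler_pM => //; exact: sqrtr_ge0.
  rewrite /t sqr_sqrtr ?divr_ge0 // ler_pdivrMr // mulrC => h; exact: h.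
exact: lerB hx hy.
Qed.
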